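(* For every $\varepsilon>0$ there is a constant $C_\varepsilon$ (depending only on $\varepsilon$) such that for every $n$-state NFA $\mathcal{A}=(\Sigma,Q,I,F,\delta)$ and every symbol $a\in\Sigma$, $$\|\mathcal{A}\|\le C_\varepsilon\,|\Sigma|\,\bigl(c(\mathcal{G}(T^{(a)}))+n^2\bigr)\max_{b\in\Sigma\setminus\{a\}}2^{\operatorname{rank}(T^{(b)})^2/(4-\varepsilon)},$$ i.e., $\|\mathcal{A}\|\in O\!\left(|\Sigma|(c(\mathcal{G}(T^{(a)}))+n^2)\max_{b\in\Sigma\setminus\{a\}}2^{\operatorname{rank}(T^{(b)})^2/(4-\varepsilon)}\right)$.
   Context: An NFA is $\mathcal{A}=(\Sigma,Q,I,F,\delta)$ with finite alphabet $\Sigma$, state set $Q=\{q_1,\dots,q_n\}$, transitions $\delta\subseteq Q\times\Sigma\times Q$ ($\varepsilon$-free). Over the Boolean semifield $\mathbb{B}=(\{0,1\},\vee,\wedge,0,1)$, the transition matrix $T^{(w)}\in\mathbb{B}^{n\times n}$ has $T^{(w)}_{i,j}=1$ iff $(q_i,w,q_j)\in\delta$. The range $\mathcal{R}(T)=\{Tv:v\in\mathbb{B}^n\}$. For $\mathcal{J}\subseteq\Sigma$, $\mathcal{M}(\mathcal{J})$ is the monoid generated by $\{T^{(w)}:w\in\mathcal{J}\}$ under Boolean matrix multiplication (containing the identity). The subset complexity is $\|\mathcal{A}\|=\min_{\mathcal{J}\subseteq\Sigma}\bigl(1+\sum_{w\in\Sigma\setminus\mathcal{J}}|\mathcal{R}(T^{(w)})|\bigr)|\mathcal{M}(\mathcal{J})|$.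 $\operatorname{rank}(T)$ is the rank of the 0/1 matrix $T$ over the field $\mathbb{F}_2$. The precedence graph $\mathcal{G}(A)$ of an $n\times n$ Boolean matrix $A$ is the directed graph on vertices $\{1,\dots,n\}$ with an edge $i\to j$ iff $A_{i,j}=1$. The cyclicity of a strongly connected component is the greatest common divisor of the lengths of all its cycles, and the cyclicity $c(\mathcal{G})$ of a directed graph is the least common multiple of the cyclicities of its maximal strongly connected components that contain at least one cycle. *)

(* Defs.v *)
From Stdlib Require Import Reals.
From mathcomp Require Import all_boot all_order all_algebra.

Set Implicit Arguments.
Unset Strict Implicit.
Unset Printing Implicit Defensive.

Section NFA.
Variables (Sigma : finType) (n : nat).

Definition trans_mx (delta : {set 'I_n * Sigma * 'I_n}) (w : Sigma) : 'M[bool]_n :=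
  \matrix_(i, j) ((i, w, j) \in delta).

Definition bmul (A B : 'M[bool]_n) : 'M[bool]_n :=
  \matrix_(i, j) [exists k, A i k && B k j].
Definition bmulv (A : 'M[bool]_n) (v : 'cV[bool]_n) : 'cV[bool]_n :=
  \col_i [exists k, A i k && v k ord0].
Definition bid : 'M[bool]_n := \matrix_(i, j) (i == j).

Definition brange (A : 'M[bool]_n) : {set 'cV[bool]_n} :=
  [set bmulv A v | v : 'cV[bool]_n].

Definition gen_monoid (T : Sigma -> 'M[bool]_n) (J : {set Sigma}) : {set 'M[bool]_n} :=
  \bigcap_(S : {set 'M[bool]_n} |
            [&& bid \in S, [forall w in J, T w \in S]
              & [forall A in S, forall B in S, bmul A B \in S]]) S.

Definition sc_term (T : Sigma -> 'M[bool]_n) (J : {set Sigma}) : nat :=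
  ((1 + \sum_(w in ~: J) #|brange (T w)|) * #|gen_monoid T J|)%N.
Definition subset_complexity (T : Sigma -> 'M[bool]_n) : nat :=
  \big[minn/sc_term T set0]_(J : {set Sigma}) sc_term T J.

Definition rank2 (A : 'M[bool]_n) : nat :=
  \rank (map_mx (fun b : bool => ((nat_of_bool b)%:R)%R : 'F_2) A).
End NFA.

Section Graph.
Variable n : nat.
Definition prec_rel (A : 'M[bool]_n) : rel 'I_n := fun i j => A i j.

Definition scc (A : 'M[bool]_n) (i : 'I_n) : {set 'I_n} :=
  [set j | connect (prec_rel A) i j && connect (prec_rel A) j i].
Definition sccs (A : 'M[bool]_n) : {set {set 'I_n}} := [set scc A i | i : 'I_n].

Definition has_cycle_len (A : 'M[bool]_n) (C : {set 'I_n}) (k : nat) : bool :=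
  [exists t : k.-tuple 'I_n,
     [&& 0 < k, cycle (prec_rel A) t, uniq t & all (fun v => v \in C) t]].

(* Cyclicity of a component: gcd of the lengths of its cycles
   (simple cycles have length <= n). *)
Definition comp_cyclicity (A : 'M[bool]_n) (C : {set 'I_n}) : nat :=
  \big[gcdn/0]_(k < n.+1 | has_cycle_len A C k) k.
Definition comp_has_cycle (A : 'M[bool]_n) (C : {set 'I_n}) : bool :=
  [exists k : 'I_n.+1, has_cycle_len A C k].

Definition cyclicity (A : 'M[bool]_n) : nat :=
  \big[lcmn/1]_(C in sccs A | comp_has_cycle A C) comp_cyclicity A C.
End Graph.

(* Main.v *)
Require Import Defs.
From Stdlib Require Import Reals.
From Stdlib Require Import Lra Psatz ClassicalEpsilon.
From mathcomp Require Import all_boot all_order all_algebra.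
From mathcomp Require Import zify.
Set Implicit Arguments.
Unset Strict Implicit.
Unset Printing Implicit Defensive.

Section Walks.
Variables (n : nat) (A : 'M[bool]_n).
Local Notation e := (prec_rel A).

Definition bpow k := iter k (fun B => bmul B A) (bid n).

Lemma bpowP k u v :
  reflect (exists p, [/\ size p = k, path e u p & last u p = v]) (bpow k u v).
Proof.
elim: k v => [|k IH] v /=.
  rewrite /bid mxE; apply: (iffP eqP) => [->|[p [/size0nil -> _ /= ->]]] //.
  by exists [::].
rewrite /bmul mxE; apply: (iffP existsP) => [[m /andP[/IH [p [sp pp lp]] Amv]]|].
  exists (rcons p v); rewrite size_rcons sp last_rcons rcons_path pp lp.
  by split.
case=> p []; case/lastP: p => [//|p w]; rewrite size_rcons last_rcons rcons_path.
move=> [sp] /andP[pp ew] wv; subst w; exists (last u p); apply/andP; split => //.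
by apply/IH; exists p.
Qed.

Lemma bpow_cat a b u w v : bpow a u w -> bpow b w v -> bpow (a + b) u v.
Proof.
move=> /bpowP[p [sp pp lp]] /bpowP[q [sq pq lq]]; apply/bpowP.
exists (p ++ q); rewrite size_cat sp sq cat_path last_cat pp lp pq lq.
by [].
Qed.

Lemma bpow_split a b u v : bpow (a + b) u v -> exists2 w, bpow a u w & bpow b w v.
Proof.
move=> /bpowP[p [sp pp lp]]; exists (last u (take a p)); apply/bpowP.
  have ha : a <= size p by rewrite sp leq_addr.
  exists (take a p); rewrite size_takel //; split => //.
  by rewrite -(cat_take_drop a p) cat_path in pp; case/andP: pp.
exists (drop a p); rewrite size_drop sp addKn; split => //.
  by rewrite -(cat_take_drop a p) cat_path in pp; case/andP: pp.
by rewrite -last_cat cat_take_drop.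
Qed.

Lemma bpow_add a b : bpow (a + b) = bmul (bpow a) (bpow b).
Proof.
apply/matrixP => u v; rewrite /bmul mxE; apply/idP/existsP.
  by move/bpow_split => [w h1 h2]; exists w; rewrite h1 h2.
by case=> w /andP[h1 h2]; apply: bpow_cat h1 h2.
Qed.

Lemma bpow1 : bpow 1 = A.
Proof.
apply/matrixP => u v; rewrite /= /bmul /bid mxE; apply/existsP/idP.
  by case=> w; rewrite mxE => /andP[/eqP-> ->].
by move=> h; exists u; rewrite mxE eqxx h.
Qed.

End Walks.

Section SCC.
Variables (n : nat) (A : 'M[bool]_n).
Local Notation e := (prec_rel A).
Definition sc x y := connect e x y && connect e y x.

Lemma in_scc x y : (y \in scc A x) = sc x y.
Proof. by rewrite inE. Qed.

Lemma sc_refl x : sc x x.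
Proof. by rewrite /sc connect0. Qed.

Lemma sc_sym x y : sc x y -> sc y x.
Proof. by rewrite /sc andbC. Qed.

Lemma sc_trans x y z : sc x y -> sc y z -> sc x z.
Proof.
case/andP=> h1 h2 /andP[h3 h4]; apply/andP; split; apply: connect_trans; eauto.
Qed.

Lemma scc_eq x y : sc x y -> scc A x = scc A y.
Proof.
move=> h; apply/setP => z; rewrite !in_scc; apply/idP/idP => h2.
  exact: sc_trans (sc_sym h) h2.
exact: sc_trans h h2.
Qed.

Lemma path_connect_last x p w : path e x p -> w \in x :: p -> connect e w (last x p).
Proof.
move=> pp; rewrite inE => /orP[/eqP->|wp].
  by apply: (path_connect pp); rewrite mem_last.
case/splitPr: wp pp => p1 p2; rewrite cat_path last_cat /= => /andP[_ /andP[_ pp2]].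
by apply/connectP; exists p2.
Qed.

Lemma path_sc x p w : path e x p -> connect e (last x p) x -> w \in x :: p ->
  sc x w.
Proof.
move=> pp cl wp; apply/andP; split; first exact: (path_connect pp).
apply: connect_trans cl; exact: path_connect_last.
Qed.

Lemma uniq_card_le (s : seq 'I_n) (S : {set 'I_n}) :
  uniq s -> {subset s <= S} -> size s <= #|S|.
Proof.
move=> us sS; rewrite -(card_uniqP us); apply: subset_leq_card.
by apply/subsetP.
Qed.

Lemma dist u v : sc u v -> exists2 p, p < #|scc A u| & bpow A p u v.
Proof.
move=> /andP[/connectP[q pq ->] cvu].
case: (shortenP pq) => q' pq' uq' sub.
exists (size q'); last by apply/bpowP; exists q'; split.
have: size (u :: q') <= #|scc A u|.
  apply: uniq_card_le => // w; rewrite in_scc inE => /orP[/eqP->|]; first exact: sc_refl.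
  move=> /sub wq; exact: path_sc pq cvu (mem_behead _).
by [].
Qed.

End SCC.

Lemma not_uniq_split (T : eqType) (p : seq T) : ~~ uniq p ->
  exists p1 v p2 p3, p = p1 ++ v :: (p2 ++ v :: p3).
Proof.
elim: p => [//|x s IH] /=; rewrite negb_and negbK => /orP[xs|/IH].
  by case/splitPr: xs => s1 s2; exists [::], x, s1, s2.
by case=> p1 [v [p2 [p3 ->]]]; exists (x :: p1), v, p2, p3.
Qed.

Section CW.
Variables (n : nat) (A : 'M[bool]_n).
Local Notation e := (prec_rel A).

Lemma cw (S : {set 'I_n}) d' : (forall k, has_cycle_len A S k -> d' %| k) ->
  forall z p, path e z p -> last z p = z -> {subset z :: p <= S} -> d' %| size p.
Proof.
move=> H z p; move: {2}(size p) (leqnn (size p)) => L; elim: L z p => [|L IH] z p.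
  by rewrite leqn0 => /eqP->.
move=> sp pp lp sub.
case up: (uniq p).
  case: p sp pp lp sub up => [//|y p'] sp pp lp sub up.
  apply: H; apply/existsP; exists (in_tuple (y :: p')); apply/and4P; split => //.
    move: pp lp => /= /andP[ezy pp'] lp.
    by rewrite rcons_path pp' lp.
  by apply/allP => w wp; apply: sub; rewrite inE wp orbT.
case/not_uniq_split: (negbT up) => p1 [v [p2 [p3 def]]].
subst p.
have h1 : d' %| size (p1 ++ v :: p3).
  apply: (IH z).
  - by move: sp; rewrite !size_cat /= size_cat /=; lia.
  - move: pp; rewrite cat_path /= cat_path /= => /and3P[a1 a2 /and3P[a3 a4 a5]].
    by rewrite cat_path /= a1 a2 a5.
  - by move: lp; rewrite !last_cat /= last_cat.
  - move=> w; rewrite !inE !mem_cat !inE => h; apply: sub.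
    by rewrite !inE !mem_cat !inE mem_cat inE; case/or3P: h => ->; rewrite ?orbT.
have h2 : d' %| size (p2 ++ [:: v]).
  apply: (IH v).
  - by move: sp; rewrite !size_cat /= size_cat /=; lia.
  - move: pp; rewrite cat_path /= cat_path /= => /and3P[a1 a2 /and3P[a3 a4 a5]].
    by rewrite cat_path /= a3 a4.
  - by rewrite last_cat.
  - move=> w; rewrite !inE !mem_cat !inE => h; apply: sub.
    by rewrite !inE !mem_cat !inE mem_cat inE; case/or3P: h => [/eqP->|->|->]; rewrite ?eqxx ?orbT.
move: h1 h2; rewrite !size_cat /= size_cat /= => h1 h2.
have -> : size p1 + (size p2 + (size p3).+1).+1 = size p1 + (size p3).+1 + (size p2 + 1) by lia.
exact: dvdn_add.
Qed.

End CW.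

Section Cyc.
Variables (n : nat) (A : 'M[bool]_n).
Local Notation e := (prec_rel A).

Lemma hcl_le S k : has_cycle_len A S k -> 0 < k <= #|S|.
Proof.
case/existsP=> t /and4P[k0 _ ut /allP aS]; rewrite k0 /=.
by rewrite -(size_tuple t); apply: uniq_card_le => // w /aS.
Qed.

Lemma hcl_len S k : has_cycle_len A S k -> k < n.+1.
Proof.
move/hcl_le=> /andP[_ h]; rewrite ltnS; apply: leq_trans h _.
by rewrite -[X in _ <= X](card_ord n) max_card.
Qed.

Lemma compcyc_dvd S k : has_cycle_len A S k -> comp_cyclicity A S %| k.
Proof.
move=> h; rewrite /comp_cyclicity (bigD1 (Ordinal (hcl_len h))) //=.
exact: dvdn_gcdl.
Qed.

Lemma dvd_compcyc S h : (forall k, has_cycle_len A S k -> h %| k) ->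
  h %| comp_cyclicity A S.
Proof.
move=> H; rewrite /comp_cyclicity; apply: (big_ind (fun x => h %| x)) => //.
  by move=> a b ha hb; rewrite dvdn_gcd ha hb.
by move=> i; apply: H.
Qed.

Lemma compcyc_pos S k : has_cycle_len A S k -> 0 < comp_cyclicity A S.
Proof.
move=> h; have /dvdn_leq := compcyc_dvd h; case/andP: (hcl_le h) => k0 _.
move=> /(_ k0); case: (comp_cyclicity A S) (compcyc_dvd h) => //.
by rewrite dvd0n => /eqP k00; move: k0; rewrite k00.
Qed.

Lemma compcyc_le S k : has_cycle_len A S k -> comp_cyclicity A S <= #|S|.
Proof.
move=> h; case/andP: (hcl_le h) => k0 kS.
exact: leq_trans (dvdn_leq k0 (compcyc_dvd h)) kS.
Qed.

Lemma compcyc_cyc x k : has_cycle_len A (scc A x) k ->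
  comp_cyclicity A (scc A x) %| cyclicity A.
Proof.
move=> h; rewrite /cyclicity (bigD1 (scc A x)) /=; first exact: dvdn_lcml.
apply/andP; split; first by apply/imsetP; exists x.
by apply/existsP; exists (Ordinal (hcl_len h)).
Qed.

Lemma cyc_pos : 0 < cyclicity A.
Proof.
rewrite /cyclicity; apply: (big_ind (fun x => 0 < x)) => //.
  by move=> a b ha hb; rewrite lcmn_gt0 ha hb.
move=> C /andP[_ /existsP[k hk]]; exact: compcyc_pos hk.
Qed.

Lemma closed_sub x p : path e x p -> last x p = x -> {subset x :: p <= scc A x}.
Proof.
move=> pp lp w wp; rewrite in_scc; apply: path_sc pp _ wp.
by rewrite lp connect0.
Qed.

Lemma closed_cycle x L : 0 < L -> bpow A L x x ->
  exists k, has_cycle_len A (scc A x) k.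
Proof.
move=> L0 /bpowP[p [sp pp lp]].
case: (boolP [exists k : 'I_n.+1, has_cycle_len A (scc A x) k]).
  by case/existsP=> k hk; exists k.
move=> /existsPn hn.
have : L.+1 %| size p.
  apply: (cw (S := scc A x)) pp lp (closed_sub pp lp) => k hk.
  by move: (hn (Ordinal (hcl_len hk))); rewrite hk.
by rewrite sp => /dvdn_leq; rewrite L0 ltnn => /(_ isT).
Qed.

Lemma closed_dvd x L : bpow A L x x -> comp_cyclicity A (scc A x) %| L.
Proof.
move=> /bpowP[p [sp pp lp]]; rewrite -sp.
apply: (cw (S := scc A x)) pp lp (closed_sub pp lp) => k hk.
exact: compcyc_dvd.
Qed.

End Cyc.

Section Frob.
Variables (Q : pred nat) (a M : nat).
Hypotheses (Q0 : Q 0) (QD : forall x y, Q x -> Q y -> Q (x + y)).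
Hypotheses (a0 : 0 < a) (aM : a <= M) (Qa : Q a).

Let h := \big[gcdn/0]_(g < M.+1 | Q g) g.
Let res m : 'I_a := Ordinal (ltn_pmod m a0).

Lemma res_eq m m' : m %% a = m' %% a -> res m = res m'.
Proof. by move=> H; apply: val_inj. Qed.

Let CLv (X : {set 'I_a}) v := forall m, res m \in X -> res (m + v) \in X.

Lemma CLv_add X u v : CLv X u -> CLv X v -> CLv X (u + v).
Proof. by move=> hu hv m /hu /hv; rewrite addnA. Qed.

Lemma CLv_mul X v k : CLv X v -> CLv X (k * v).
Proof.
move=> hv; elim: k => [|k IH] m; first by rewrite addn0.
by rewrite mulSn; apply: CLv_add.
Qed.

Lemma CLv_gcd X u v : CLv X u -> CLv X v -> CLv X (gcdn u v).
Proof.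
move=> hu hv; case: (posnP u) => [->|u0]; first by rewrite gcd0n.
case: (Bezoutl v u0) => al _ /dvdnP[be hbe] m hm.
have -> : res (m + gcdn u v) = res (m + (be * u + (a.-1 * al) * v)).
  apply: res_eq; rewrite -mulnA.
  have -> : be * u + a.-1 * (al * v) = gcdn u v + a * (al * v).
    rewrite -hbe; case: a a0 => // a' _ /=; rewrite mulSn; lia.
  by rewrite addnA -[RHS]modnDmr modnMr addn0.
by apply: CLv_add hm; apply: CLv_mul.
Qed.

Definition closedR (X : {set 'I_a}) :=
  forall m g, res m \in X -> g <= M -> Q g -> res (m + g) \in X.
Definition fullR (X : {set 'I_a}) := forall m, h %| m -> res m \in X.

Lemma closed_full (X : {set 'I_a}) : res 0 \in X -> closedR X -> fullR X.
Proof.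
move=> X0 cX; have : CLv X h.
  rewrite /h; apply: (big_ind (CLv X)).
  - by move=> m; rewrite addn0.
  - by move=> x y; apply: CLv_gcd.
  - move=> [g gM] /= Qg m hm; apply: cX => //.
move=> ch m /dvdnP[k ->]; have := CLv_mul k ch X0; by rewrite add0n.
Qed.

Definition Rt t : {set 'I_a} :=
  [set r : 'I_a | [exists x : 'I_t.+1, Q x && (res x == r)]].

Lemma Rt_mono t t' : t <= t' -> Rt t \subset Rt t'.
Proof.
move=> tt; apply/subsetP => r; rewrite !inE => /existsP[x /andP[Qx xr]].
apply/existsP; exists (widen_ord (n := t.+1) (m := t'.+1) ltac:(by rewrite ltnS) x).
by rewrite Qx.
Qed.

Lemma Rt_mem t m x : x <= t -> Q x -> x %% a = m %% a -> res m \in Rt t.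
Proof.
move=> xt Qx xm; rewrite inE; apply/existsP; exists (@Ordinal t.+1 x ltac:(by rewrite ltnS)).
by rewrite Qx (res_eq xm) eqxx.
Qed.

Lemma Rt_memP t m : res m \in Rt t -> exists2 x, x <= t & Q x && (x %% a == m %% a).
Proof.
rewrite inE => /existsP[[x xt] /andP[Qx /eqP xr]]; exists x; first by rewrite -ltnS.
by rewrite Qx; move: xr => /(congr1 val) /= ->.
Qed.

Lemma Rt_closed t : Rt t = Rt (t + M) -> closedR (Rt t).
Proof.
move=> eq m g /Rt_memP[x xt /andP[Qx /eqP xm]] gM Qg; rewrite eq.
apply: (Rt_mem (x := x + g)); first by rewrite leq_add.
  exact: QD.
by rewrite -modnDml xm modnDml.
Qed.

Lemma Rt0 t : res 0 \in Rt t.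
Proof. exact: (Rt_mem (x := 0)). Qed.

Lemma Rt_grow j : j < #|Rt (j * M)| \/ fullR (Rt (j * M)).
Proof.
elim: j => [|j [IH|IH]].
  by left; rewrite card_gt0; apply/set0Pn; exists (res 0); apply: Rt0.
- have sub : Rt (j * M) \subset Rt (j.+1 * M) by apply: Rt_mono; rewrite leq_mul2r leqnSn orbT.
  case: (eqVneq (Rt (j * M)) (Rt (j.+1 * M))) => [eq|neq].
    right; rewrite -eq; apply: closed_full; first exact: Rt0.
    by apply: Rt_closed; rewrite eq mulSn addnC.
  left; apply: (leq_ltn_trans IH); apply: proper_card; by rewrite properEneq neq sub.
- right => m hm; apply: (subsetP (Rt_mono _)) (IH m hm).
  by rewrite leq_mul2r leqnSn orbT.
Qed.

Lemma Q_mula k : Q (k * a).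
Proof. by elim: k => [|k IH]; rewrite ?mul0n // mulSn; apply: QD. Qed.

Lemma frob m : h %| m -> a * M <= m -> Q m.
Proof.
move=> hm am.
have full : fullR (Rt (a * M)).
  case: (Rt_grow a) => // H; exfalso.
  by move: (max_card (mem (Rt (a * M)))); rewrite card_ord leqNgt H.
case/Rt_memP: (full m hm) => x xt /andP[Qx /eqP xm].
have xm' : x <= m by apply: leq_trans am.
have -> : m = x + (m - x) %/ a * a.
  rewrite divnK ?subnKC //.
  have H : x + 0 == x + (m - x) %[mod a] by rewrite addn0 subnKC // xm.
  by move: H; rewrite /dvdn eqn_modDl mod0n eq_sym.
by apply: QD => //; apply: Q_mula.
Qed.

End Frob.

Lemma frobenius (Q : pred nat) (a M : nat) : Q 0 -> (forall x y, Q x -> Q y -> Q (x + y)) ->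
  0 < a -> a <= M -> Q a -> forall m, \big[gcdn/0]_(g < M.+1 | Q g) g %| m -> a * M <= m -> Q m.
Proof. move=> Q0 QD a0 aM Qa m; exact: frob. Qed.

Lemma biggcd_dvd (Q : pred nat) M g : g <= M -> Q g ->
  \big[gcdn/0]_(i < M.+1 | Q i) i %| g.
Proof.
move=> gM Qg; rewrite (bigD1 (@Ordinal M.+1 g ltac:(by rewrite ltnS))) //=.
exact: dvdn_gcdl.
Qed.

Lemma arith1 s rho l' : rho < s -> 10*s*s <= l' -> 3*s*(3*s) + rho <= l'.
Proof. nia. Qed.
Lemma arith2 p k q s : p < s -> k <= s -> q < s -> p + k + q <= 3 * s.
Proof. lia. Qed.

Section Flex.
Variables (n : nat) (A : 'M[bool]_n).
Local Notation e := (prec_rel A).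

Lemma bpow0 x : bpow A 0 x x.
Proof. by rewrite /= /bid mxE eqxx. Qed.

Lemma hcl_walk S k : has_cycle_len A S k -> exists2 w, w \in S & bpow A k w w.
Proof.
case/existsP=> t /and4P[k0 ct ut /allP aS].
case: t ct ut aS => [[|w t'] st] //=; first by move: k0; rewrite -(eqP st).
move=> ct _ aS; exists w; first by apply: aS; rewrite inE eqxx.
apply/bpowP; exists (rcons t' w); rewrite size_rcons last_rcons.
by split => //; apply/eqP.
Qed.

Lemma scc_card_eq x y : sc A x y -> #|scc A x| = #|scc A y|.
Proof. by move/scc_eq ->. Qed.

Lemma flex x y l l' : sc A x y -> 0 < l -> bpow A l x y ->
  10 * #|scc A x| * #|scc A x| <= l' ->
  l' = l %[mod comp_cyclicity A (scc A x)] -> bpow A l' x y.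
Proof.
move=> sxy l0 bl Bl' ml.
set S := scc A x; set s := #|S|; set d := comp_cyclicity A S.
have [sig sigs bsig] := dist (sc_sym sxy).
rewrite -(scc_card_eq sxy) -/S -/s in sigs.
have [rho rhos brho] := dist sxy.
rewrite -/S -/s in rhos.
have cl : bpow A (l + sig) x x by apply: bpow_cat bl bsig.
have [k hk] : exists k, has_cycle_len A S k.
  by apply: (closed_cycle (L := l + sig)) cl; rewrite addn_gt0 l0.
have d1 : d %| l + sig by apply: closed_dvd.
have d2 : d %| rho + sig by apply: closed_dvd; apply: bpow_cat brho bsig.
have mr : l' = rho %[mod d].
  rewrite ml; apply/eqP; rewrite -(eqn_modDr sig).
  by move: d1 d2; rewrite /dvdn => /eqP -> /eqP ->.
have s0 : 0 < s := leq_ltn_trans (leq0n rho) rhos.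
have rl' : rho <= l'.
  have h10 : s <= 10 * s * s by rewrite -mulnA -[X in X <= _]mul1n leq_mul // -[X in X <= _]muln1 leq_mul.
  by apply: leq_trans (ltnW rhos) (leq_trans h10 Bl').
have dd : d %| l' - rho by rewrite -eqn_mod_dvd // mr.
pose Q := fun m => bpow A m x x.
have Q0 : Q 0 by apply: bpow0.
have QD : forall a b, Q a -> Q b -> Q (a + b) by move=> a b; apply: bpow_cat.
have gen : forall k', has_cycle_len A S k' -> exists p q,
    [/\ p < s, q < s, Q (p + q) & Q (p + k' + q)].
  move=> k' hk'; case: (hcl_walk hk') => w wS bw.
  have sxw : sc A x w by rewrite -in_scc.
  have [p ps bp] := dist sxw; have [q qs bq] := dist (sc_sym sxw).
  rewrite -(scc_card_eq sxw) in qs.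
  exists p, q; split => //; first exact: bpow_cat bp bq.
  by apply: bpow_cat bq; apply: bpow_cat bp bw.
have [p [q [ps qs _ Qa]]] := gen k hk.
have [k0 ks] := andP (hcl_le hk).
have hd : \big[gcdn/0]_(g < (3 * s).+1 | Q g) g %| d.
  apply: dvd_compcyc => k' hk'.
  have [p' [q' [ps' qs' Q1 Q2]]] := gen k' hk'.
  have [_ ks'] := andP (hcl_le hk').
  move: ps' qs' ks'; rewrite -/S -/s => ps' qs' ks'.
  have e3 : 3 * s = s + s + s by rewrite !mulSn mul0n addn0 addnA.
  have e2 : p' + k' + q' <= 3 * s.
    by rewrite e3; apply: leq_add; [apply: leq_add => //; apply: ltnW|apply: ltnW].
  have e1 : p' + q' <= 3 * s by apply: leq_trans e2; rewrite leq_add2r leq_addr.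
  have h1 := biggcd_dvd e1 Q1.
  have h2 := biggcd_dvd e2 Q2.
  by move: h2; rewrite addnAC (dvdn_addr _ h1).
have : Q (l' - rho).
  apply: (frobenius (a := p + k + q) (M := 3 * s)) => //.
  - by rewrite addn_gt0 addn_gt0 k0 orbT.
  - exact: arith2.
  - exact: dvdn_trans hd dd.
  - apply: leq_trans (leq_mul (arith2 ps ks qs) (leqnn _)) _.
    by rewrite leq_subRL //; rewrite addnC; apply: arith1.
move=> Ql; have := bpow_cat Ql brho; by rewrite subnK.
Qed.

End Flex.

Section Chain.
Variables (n : nat) (A : 'M[bool]_n).
Local Notation e := (prec_rel A).

Inductive chain : 'I_n -> 'I_n -> seq ('I_n * 'I_n) -> Prop :=
| ch1 x y : sc A x y -> chain x y [:: (x, y)]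
| chS x y x' j ps : sc A x y -> A y x' -> ~~ sc A y x' -> chain x' j ps ->
    chain x j ((x, y) :: ps).

Lemma chain_pos i j ps : chain i j ps -> 0 < size ps.
Proof. by case. Qed.

Lemma chain_sc i j ps : chain i j ps -> forall pr, pr \in ps -> sc A pr.1 pr.2.
Proof.
elim=> [x y h|x y x' j' ps' h _ _ _ IH] pr; rewrite inE.
  by move/eqP->.
by case/orP=> [/eqP->|/IH].
Qed.

Lemma chain_nth_sc i j ps d0 k : chain i j ps -> k < size ps ->
  sc A (nth d0 ps k).1 (nth d0 ps k).2.
Proof. by move=> ch ks; apply: (chain_sc ch); apply: mem_nth. Qed.

Lemma realize i j ps : chain i j ps -> forall f : nat -> nat,
  (forall k, k < size ps -> bpow A (f k) (nth (i, i) ps k).1 (nth (i, i) ps k).2) ->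
  bpow A (\sum_(k < size ps) f k + (size ps).-1) i j.
Proof.
elim=> [x y h|x y x' j' ps' h Ayx nsc ch IH] f H.
  by rewrite big_ord1 addn0; apply: (H 0).
have H' : forall k, k < size ps' -> bpow A (f k.+1) (nth (x', x') ps' k).1 (nth (x', x') ps' k).2.
  by move=> k ks; rewrite (set_nth_default (x, x)) //; apply: (H k.+1).
have := IH (fun k => f k.+1) H'.
rewrite /= big_ord_recl /=.
have b0 : bpow A (f 0 + 1) x x'.
  by apply: bpow_cat (H 0 isT) _; rewrite bpow1.
move=> /(bpow_cat b0).
have := chain_pos ch; case: (size ps') => // m _ /=.
have -> : \sum_(i0 < m.+1) f (bump 0 i0) = \sum_(k < m.+1) f k.+1.
  by apply: eq_bigr => k _; rewrite /bump leq0n add1n.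
move: (\sum_(k < m.+1) f k.+1) (f 0) => s0 f0.
by have -> : f0 + s0 + m.+1 = f0 + 1 + (s0 + m) by lia.
Qed.

Lemma chain_merge i y j ps : sc A i y -> chain y j ps ->
  exists y1 rest, ps = (y, y1) :: rest /\ chain i j ((i, y1) :: rest).
Proof.
move=> siy ch; inversion ch; subst.
  by exists j, [::]; split => //; apply: ch1; apply: sc_trans siy H.
exists y0, ps0; split => //; apply: (chS (x' := x')) => //.
exact: sc_trans siy H.
Qed.

Lemma decomp i p : path e i p -> exists ps ls,
  [/\ chain i (last i p) ps, size ls = size ps,
      (forall k, k < size ps -> bpow A (nth 0 ls k) (nth (i, i) ps k).1 (nth (i, i) ps k).2)
    & sumn ls + (size ps).-1 = size p].
Proof.
elim: p i => [|y p IH] i /=.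
  move=> _; exists [:: (i, i)], [:: 0]; split => //; first by apply: ch1; apply: sc_refl.
  by case=> // _; apply: bpow0.
case/andP=> eiy /IH [ps [ls [ch sz H sm]]].
case: (boolP (sc A i y)) => siy.
  have [y1 [rest [defps ch']]] := chain_merge siy ch.
  subst ps; case: ls sz H sm => [//|l ls] /= [sz] H sm.
  exists ((i, y1) :: rest), (l.+1 :: ls); split => //=; first by rewrite sz.
    case=> [_|k ks] /=.
      have := H 0 isT; rewrite /= => b.
      have : bpow A (1 + l) i y1 by apply: bpow_cat b; rewrite bpow1.
      by rewrite add1n.
    by rewrite (set_nth_default (y, y)) //; apply: (H k.+1).
  by rewrite -sm addSn.
exists ((i, i) :: ps), (0 :: ls); split => //=.
- by apply: (chS (x' := y)) => //; apply: sc_refl.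
- by rewrite sz.
- case=> [_|k ks] /=; first exact: bpow0.
  by rewrite (set_nth_default (y, y)) //; apply: H.
- by rewrite add0n -sm; have := chain_pos ch; case: (size ps) => //= m _; rewrite addnS.
Qed.

Definition rk x := #|[set z | connect e x z]|.

Lemma chain_rank i j ps : chain i j ps -> sumn [seq #|scc A pr.1| | pr <- ps] <= rk i.
Proof.
elim=> [x y h|x y x' j' ps' h Ayx nsc ch IH] /=.
  rewrite addn0; apply: subset_leq_card; apply/subsetP => z.
  by rewrite in_scc inE => /andP[].
apply: leq_trans (leq_add (leqnn _) IH) _.
rewrite /rk.
have dis : scc A x :&: [set z | connect e x' z] = set0.
  apply/setP => z; rewrite !inE andbC; apply/negbTE/negP => /andP[cx'z /andP[cxz czx]].
  case/negP: nsc; apply/andP; split; first by apply: connect1.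
  apply: connect_trans (connect_trans cx'z czx) _; by case/andP: h.
rewrite -cardsUI dis cards0 addn0; apply: subset_leq_card; apply/subsetP => z.
rewrite !inE => /orP[/andP[]//|cx'z].
apply: connect_trans cx'z; apply: connect_trans (connect1 Ayx).
by case/andP: h.
Qed.

Lemma rk_le x : rk x <= n.
Proof. by rewrite /rk -[X in _ <= X](card_ord n) max_card. Qed.

End Chain.

Definition pb (P : Prop) : bool := if excluded_middle_informative P then true else false.
Lemma pbP P : reflect P (pb P).
Proof. by rewrite /pb; case: excluded_middle_informative => h; constructor. Qed.

Lemma arith3 B l d : B <= l -> 0 < d -> l - (l - B) %/ d * d <= B + d.
Proof.
move=> Bl d0; have := leq_trunc_div (l - B) d; have := ltn_pmod (l - B) d0.
have := divn_eq (l - B) d; lia.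
Qed.

Lemma arith4 B l d : B <= l -> B <= l - (l - B) %/ d * d.
Proof. move=> Bl; have := leq_trunc_div (l - B) d; lia. Qed.

Lemma sum_le_mul m (F G : nat -> nat) c : (forall k, k < m -> F k <= c * G k) ->
  \sum_(k < m) F k <= c * \sum_(k < m) G k.
Proof.
move=> H; rewrite big_distrr /=; apply: leq_sum => k _; exact: H.
Qed.

Lemma ar_noU x y n m : x <= y -> y <= (10 * n + 1) * n -> m <= n -> 0 < m ->
  x + m.-1 < 11 * n * n + 2 * n.
Proof. lia. Qed.
Lemma ar_T0 x y n m : x <= y -> y <= (10 * n + 1) * n -> m <= n -> 0 < m ->
  x + m.-1 <= 10 * n * n + 2 * n - 1.
Proof. lia. Qed.
Lemma ar_T2a T0 T2 n : T0 <= 10 * n * n + 2 * n - 1 -> 11 * n * n + 2 * n <= T2 -> T0 <= T2.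
Proof. lia. Qed.
Lemma ar_T2b T0 T2 n : T0 <= 10 * n * n + 2 * n - 1 -> 11 * n * n + 2 * n <= T2 -> n * n <= T2 - T0.
Proof. lia. Qed.

Section Abstract.
Variables (m n c : nat) (P : nat -> nat -> Prop) (l s d : nat -> nat).
Hypotheses (m0 : 0 < m) (Pl : forall k, k < m -> P k (l k))
  (s1 : forall k, k < m -> 0 < s k) (ssum : \sum_(k < m) s k <= n)
  (sn : forall k, k < m -> s k <= n).
Let B k := 10 * s k * s k.
Hypothesis flexH : forall k, k < m -> B k <= l k -> [/\ 0 < d k, d k <= s k, d k %| c &
       forall L, B k <= L -> L = l k %[mod d k] -> P k L].

Let U k := B k <= l k.
Let d' k := if U k then d k else 0.
Let e k := if U k then (l k - B k) %/ d k else 0.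
Let l0 k := l k - e k * d' k.

Lemma l_split k : l k = l0 k + e k * d' k.
Proof.
rewrite /l0 subnK // /e /d' /U; case: ifP => // Bl.
by apply: leq_trans (leq_trunc_div _ _) (leq_subr _ _).
Qed.

Lemma l0_le k : k < m -> l0 k <= B k + s k.
Proof.
move=> km; rewrite /l0 /e /d' /U; case: ifP => Bl.
  have [d0 ds _ _] := flexH km Bl.
  by apply: leq_trans (arith3 _ d0) _; rewrite ?leq_add2l.
move/negbT: Bl; rewrite -ltnNge => lB; rewrite muln0 subn0.
exact: leq_trans (ltnW lB) (leq_addr _ _).
Qed.

Lemma sum_B_s : \sum_(k < m) (B k + s k) <= (10 * n + 1) * n.
Proof.
apply: leq_trans (leq_mul (leqnn _) ssum).
apply: (sum_le_mul (F := fun k => B k + s k) (G := s)) => k km; rewrite /B.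
have := sn km; move: (s k) => x; nia.
Qed.

Lemma m_le_n : m <= n.
Proof.
apply: leq_trans ssum; rewrite -[X in X <= _](card_ord m) -sum1_card.
by apply: leq_sum => k _; apply: s1.
Qed.

Lemma abstract_main T2 : 11 * n * n + 2 * n <= \sum_(k < m) l k + m.-1 ->
  11 * n * n + 2 * n <= T2 -> T2 = \sum_(k < m) l k + m.-1 %[mod c] ->
  exists f, (forall k, k < m -> P k (f k)) /\ \sum_(k < m) f k + m.-1 = T2.
Proof.
move=> NT1 NT2 mT.
have mn := m_le_n.
have SBs := sum_B_s.
have [k0 k0m Uk0] : exists2 k0, k0 < m & U k0.
  case: (boolP [exists k : 'I_m, U k]) => [/existsP[k Uk]|/existsPn nU].
    by exists k.
  exfalso; move: NT1; apply/negP; rewrite -ltnNge.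
  have : \sum_(k < m) l k <= \sum_(k < m) (B k + s k).
    apply: leq_sum => k _; apply: leq_trans (leq_addr _ _).
    by move: (nU k); rewrite /U -ltnNge => /ltnW.
  move=> h1; exact: ar_noU h1 SBs mn m0.
have [dk00 dk0s dk0c _] := flexH k0m Uk0.
pose Q := fun t => pb (exists g : nat -> nat, t = \sum_(k < m) g k * d' k).
have Q0 : Q 0.
  by apply/pbP; exists (fun _ => 0); rewrite big1 // => k _; rewrite mul0n.
have QD : forall x y, Q x -> Q y -> Q (x + y).
  move=> x y /pbP[g1 ->] /pbP[g2 ->]; apply/pbP; exists (fun k => g1 k + g2 k).
  by rewrite -big_split /=; apply: eq_bigr => k _; rewrite mulnDl.
have Qa : Q (d k0).
  apply/pbP; exists (fun k => (k == k0) : nat).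
  rewrite (bigD1 (Ordinal k0m)) //= eqxx mul1n big1 ?addn0.
    by rewrite /d' Uk0.
  by move=> k /eqP nk; case: eqP => [kk|]; rewrite ?mul0n //; case: nk; apply: val_inj.
set h := \big[gcdn/0]_(g < n.+1 | Q g) g.
have hd' : forall k, k < m -> h %| d' k.
  move=> k km; rewrite /d'; case: ifP => Uk; last exact: dvdn0.
  have [dk0 dks _ _] := flexH km Uk.
  apply: biggcd_dvd; first exact: leq_trans dks (sn km).
  apply/pbP; exists (fun i => (i == k) : nat).
  rewrite (bigD1 (Ordinal km)) //= eqxx mul1n big1 ?addn0.
    by rewrite /d' Uk.
  by move=> i /eqP nk; case: eqP => [kk|]; rewrite ?mul0n //; case: nk; apply: val_inj.
have hc : h %| c.
  apply: dvdn_trans dk0c; apply: dvdn_trans (hd' _ k0m) _; by rewrite /d' Uk0.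
set T0 := \sum_(k < m) l0 k + m.-1.
have T1E : \sum_(k < m) l k + m.-1 = T0 + \sum_(k < m) e k * d' k.
  rewrite /T0 addnAC -big_split /=; congr (_ + _); apply: eq_bigr => k _.
  exact: l_split.
have T0le : T0 <= 10 * n * n + 2 * n - 1.
  have : \sum_(k < m) l0 k <= \sum_(k < m) (B k + s k).
    by apply: leq_sum => k _; apply: l0_le.
  move=> h1; exact: ar_T0 h1 SBs mn m0.
have hT : h %| T2 - T0.
  rewrite -eqn_mod_dvd; last exact: ar_T2a T0le NT2.
  rewrite -(modn_dvdm T2 hc) mT modn_dvdm // T1E.
  have hs : h %| \sum_(k < m) e k * d' k.
    by apply: dvdn_sum => k _; apply: dvdn_mull; exact: hd'.
  by rewrite -modnDmr (eqP hs) addn0.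
have : Q (T2 - T0).
  apply: (frobenius (a := d k0) (M := n)) => //.
    exact: leq_trans dk0s (sn k0m).
  apply: leq_trans (leq_mul (leq_trans dk0s (sn k0m)) (leqnn n)) _.
  exact: ar_T2b T0le NT2.
case/pbP=> g gE.
exists (fun k => l0 k + g k * d' k); split.
  move=> k km; rewrite /d'; case: ifPn => Uk.
    have [dk0 dks _ fl] := flexH km Uk.
    apply: fl.
      apply: leq_trans (leq_addr _ _); rewrite /l0 /e /d' Uk; exact: arith4.
    rewrite (l_split k) /d' Uk.
    by rewrite -modnDmr modnMl addn0 -[in RHS]modnDmr modnMl addn0.
  by rewrite muln0 addn0 /l0 /e /d' (negbTE Uk) muln0 subn0; apply: Pl.
rewrite big_split /= -gE addnAC -/T0 subnKC //.
exact: ar_T2a T0le NT2.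
Qed.

End Abstract.

Lemma sumn_nth s : sumn s = \sum_(k < size s) nth 0 s k.
Proof. by rewrite sumnE (big_nth 0) big_mkord. Qed.

Lemma sumn_map_nth (T : Type) (x0 : T) (F : T -> nat) s :
  sumn [seq F x | x <- s] = \sum_(k < size s) F (nth x0 s k).
Proof.
rewrite sumn_nth size_map; apply: eq_bigr => k _; exact: nth_map.
Qed.

Section Period.
Variables (n : nat) (A : 'M[bool]_n).
Local Notation e := (prec_rel A).

Lemma period i j T1 T2 : 11 * n * n + 2 * n <= T1 -> 11 * n * n + 2 * n <= T2 ->
  T2 = T1 %[mod cyclicity A] -> bpow A T1 i j -> bpow A T2 i j.
Proof.
move=> NT1 NT2 mT /bpowP[p [sp pp lp]].
have [ps [ls [ch szl H sm]]] := decomp pp.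
rewrite lp in ch.
pose xk k := (nth (i, i) ps k).1.
pose yk k := (nth (i, i) ps k).2.
have s1 : forall k, k < size ps -> 0 < #|scc A (xk k)|.
  by move=> k _; rewrite card_gt0; apply/set0Pn; exists (xk k); rewrite in_scc sc_refl.
have ssum : \sum_(k < size ps) #|scc A (xk k)| <= n.
  apply: leq_trans (rk_le A i).
  by rewrite -(sumn_map_nth (i, i) (fun pr => #|scc A pr.1|)); apply: chain_rank ch.
have sn : forall k, k < size ps -> #|scc A (xk k)| <= n.
  by move=> k _; rewrite -[X in _ <= X](card_ord n) max_card.
have flexH : forall k, k < size ps -> 10 * #|scc A (xk k)| * #|scc A (xk k)| <= nth 0 ls k ->
   [/\ 0 < comp_cyclicity A (scc A (xk k)), comp_cyclicity A (scc A (xk k)) <= #|scc A (xk k)|,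
      comp_cyclicity A (scc A (xk k)) %| cyclicity A &
       forall L, 10 * #|scc A (xk k)| * #|scc A (xk k)| <= L ->
         L = nth 0 ls k %[mod comp_cyclicity A (scc A (xk k))] -> bpow A L (xk k) (yk k)].
  move=> k km Bl.
  have sxy := chain_nth_sc (i, i) ch km.
  have l0 : 0 < nth 0 ls k.
    by apply: leq_trans Bl; rewrite !muln_gt0 s1.
  have [sig _ bsig] := dist (sc_sym sxy).
  have [k' hk'] : exists k', has_cycle_len A (scc A (xk k)) k'.
    apply: (closed_cycle (L := nth 0 ls k + sig)); first by rewrite addn_gt0 l0.
    exact: bpow_cat (H k km) bsig.
  split.
  + exact: compcyc_pos hk'.
  + exact: compcyc_le hk'.
  + exact: compcyc_cyc hk'.
  + move=> L BL mL; exact: (flex sxy l0 (H k km)).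
have T1E : \sum_(k < size ps) nth 0 ls k + (size ps).-1 = T1 by rewrite -szl -sumn_nth szl sm sp.
have := @abstract_main (size ps) n (cyclicity A)
  (fun k L => bpow A L (xk k) (yk k)) (nth 0 ls) (fun k => #|scc A (xk k)|)
  (fun k => comp_cyclicity A (scc A (xk k))) (chain_pos ch) H s1 ssum sn flexH T2.
rewrite T1E => /(_ NT1 NT2 mT) [f [Pf fE]].
by rewrite -fE; apply: (realize ch (f := f)) => k km; apply: Pf.
Qed.

End Period.

Section Mon.
Variables (Sigma : finType) (n : nat) (T : Sigma -> 'M[bool]_n) (a : Sigma).
Let A := T a.
Let c := cyclicity A.
Let N := 11 * n * n + 2 * n.

Lemma reduce k : exists2 k', k' < N + c & bpow A k = bpow A k'.
Proof.
elim: k {-2}k (leqnn k) => [|K IH] k kK.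
  by exists k => //; move: kK; rewrite leqn0 => /eqP->; rewrite addn_gt0 cyc_pos orbT.
case: (ltnP k (N + c)) => [kN|kN]; first by exists k.
have c0 : 0 < c := cyc_pos A.
have kc : c <= k by apply: leq_trans kN; rewrite leq_addl.
have [k' k'N ek] := IH (k - c) ltac:(by move: kK kN c0 kc; clear; lia).
exists k' => //; rewrite -ek.
  apply/matrixP => u v; apply/idP/idP; apply: period.
  - by move: kN; lia.
  - by move: kN; lia.
  - by rewrite -{2}(subnK kc) modnDr.
  - by move: kN; lia.
  - by move: kN; lia.
  - by rewrite -{1}(subnK kc) modnDr.
Qed.

Lemma monoid_bound : #|gen_monoid T [set a]| <= N + c.
Proof.
pose X := [set bpow A k | k : 'I_(N + c)].
have memX : forall k, bpow A k \in X.
  move=> k; have [k' k'N ->] := reduce k.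
  by apply/imsetP; exists (Ordinal k'N).
have sub : gen_monoid T [set a] \subset X.
  rewrite /gen_monoid; apply: bigcap_inf; apply/and3P; split.
  - exact: (memX 0).
  - apply/forall_inP => w; rewrite inE => /eqP->; rewrite -/A -(bpow1 A); exact: memX.
  - apply/forall_inP => B /imsetP[i _ ->]; apply/forall_inP => C /imsetP[j _ ->].
    by rewrite -bpow_add; apply: memX.
apply: leq_trans (subset_leq_card sub) _.
by apply: leq_trans (leq_imset_card _ _) _; rewrite card_ord.
Qed.

End Mon.

Section LinAlg1.
Import GRing.Theory.
Local Open Scope ring_scope.

Lemma F2_cases (x : 'F_2) : x = ((x != 0 : bool) : nat)%:R.
Proof. by case: x => [[|[|]] //] ?; apply: val_inj. Qed.
Lemma F2_nat_neq0 (b : bool) : (((b : nat)%:R : 'F_2) != 0) = b.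
Proof. by case: b. Qed.

Lemma cV_neq0 m (F : fieldType) (X : 'cV[F]_m) : (X != 0) = [exists j, X j 0 != 0].
Proof.
apply/idP/existsP => [nz|[j nj]].
  apply/existsP; apply: contraR nz => /existsPn H; apply/eqP/matrixP => i k.
  by rewrite (ord1 k) mxE; apply/eqP; move: (H i); rewrite negbK.
by apply: contraNneq nj => ->; rewrite mxE.
Qed.

Lemma genmx_mul0 m1 m2 p (F : fieldType) (X : 'M[F]_(m1, m2)) (y : 'M[F]_(m2, p)) :
  (<<X>>%MS *m y == 0) = (X *m y == 0).
Proof.
have [D1 e1] : exists D, X = D *m <<X>>%MS by apply/submxP; rewrite genmxE.
have [D2 e2] : exists D, <<X>>%MS = D *m X by apply/submxP; rewrite genmxE.
apply/eqP/eqP => h.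
  by rewrite e1 -mulmxA h mulmx0.
by rewrite e2 -mulmxA h mulmx0.
Qed.

Section Encode.
Variable r : nat.

Definition Zfull (P : {set 'I_r}) (G : {ffun 'I_r * 'I_r -> bool}) : 'M['F_2]_r :=
  \matrix_(p, j) ((((p \in P) && (if j \in P then p == j else G (p, j))) : bool) : nat)%:R.

Lemma encode k (W : 'M['F_2]_(k, r)) : exists P G,
  G \in pffun_on false (setX P (~: P)) predT /\ (Zfull P G == W)%MS.
Proof.
have [Y eY] : {Y : 'M['F_2]_(\rank W, r) | Y = row_base W} by exists (row_base W).
set Yt := Y^T.
set f := maxrankfun Yt.
have finj : injective f := @maxrankfun_inj _ _ _ Yt.
pose S : 'M['F_2]_(r, \rank Yt) := \matrix_(p, x) (((f x == p) : bool) : nat)%:R.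
have YS : Y *m S = (rowsub f Yt)^T.
  apply/matrixP => a x; rewrite !mxE (bigD1 (f x)) //= mxE eqxx mulr1 big1 ?addr0.
    by [].
  by move=> j /negbTE nj; rewrite mxE eq_sym nj mulr0.
have rf : row_full ((rowsub f Yt)^T).
  rewrite /row_full mxrank_tr.
  by have := maxrowsub_free Yt; rewrite /row_free.
case/row_fullP: rf => D hD.
have [Z eZ] : {Z : 'M['F_2]_(\rank Yt, r) | Z = D *m Y} by exists (D *m Y).
have ZS : Z *m S = 1%:M by rewrite eZ -mulmxA YS.
have StS : S^T *m S = 1%:M.
  apply/matrixP => x x'; rewrite !mxE (bigD1 (f x)) //= !mxE eqxx mul1r big1 ?addr0.
    by rewrite (inj_eq finj) eq_sym.
  by move=> p /negbTE np; rewrite !mxE eq_sym np mul0r.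
pose P := [set f x | x : 'I_(\rank Yt)].
pose G := [ffun pj : 'I_r * 'I_r =>
  [exists x : 'I_(\rank Yt), (f x == pj.1) && (pj.2 \notin P) && (Z x pj.2 != 0)]].
have ZSZ : Zfull P G = S *m Z.
  apply/matrixP => p j; rewrite !mxE.
  case: (boolP (p \in P)) => [/imsetP[x0 _ ->]|pP] /=.
    rewrite (bigD1 x0) //= mxE eqxx mul1r big1 ?addr0; last first.
      by move=> x /negbTE nx; rewrite mxE (inj_eq finj) nx mul0r.
    case: (boolP (j \in P)) => [/imsetP[x1 _ ->]|jP].
      rewrite (inj_eq finj).
      have := congr1 (fun M : 'M['F_2]_(\rank Yt) => M x0 x1) ZS; rewrite !mxE => <-.
      rewrite (bigD1 (f x1)) //= mxE eqxx mulr1 big1 ?addr0 //.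
      by move=> j' /negbTE nj; rewrite mxE eq_sym nj mulr0.
    rewrite ffunE /=.
    have -> : [exists x, (f x == f x0) && (j \notin P) && (Z x j != 0)] = (Z x0 j != 0).
      apply/existsP/idP => [[x /andP[/andP[/eqP /finj -> _] //]]|h].
      by exists x0; rewrite eqxx h jP.
    by rewrite -F2_cases.
  rewrite big1 //= => x _; rewrite mxE.
  case: eqP => [ex|_]; last by rewrite mul0r.
  by case/negP: pP; rewrite -ex; apply: imset_f.
have hZ : (Zfull P G == Z)%MS.
  apply/andP; split; first by rewrite ZSZ submxMl.
  have -> : Z = S^T *m Zfull P G by rewrite ZSZ mulmxA StS mul1mx.
  exact: submxMl.
have hY : (Z == Y)%MS.
  have sZY : (Z <= Y)%MS by rewrite eZ submxMl.
  apply/andP; split => //; rewrite -(geq_leqif (mxrank_leqif_sup sZY)).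
  have h := mxrankM_maxl Z S; rewrite ZS in h.
  by apply: leq_trans _ h; rewrite mxrank1 /Yt mxrank_tr.
exists P, G; split.
  apply/pffun_onP; split.
    apply/subsetP => [[p j]]; rewrite inE ffunE /= eqbF_neg negbK => /existsP[x /andP[/andP[/eqP <- jP] _]].
    by rewrite inE /= inE imset_f // inE.
  by move=> b _.
apply/eqmxP; apply: eqmx_trans (eqmxP hZ) _; apply: eqmx_trans (eqmxP hY) _.
rewrite eY; exact: eq_row_base.
Qed.

End Encode.

End LinAlg1.

Section LinAlg12.
Import GRing.Theory.

Lemma sq x y : x * y * 4 <= (x + y) * (x + y).
Proof.
case: (leqP x y) => h.
  have [d ->] : exists d, y = x + d by exists (y - x); lia.
  nia.
have [d ->] : exists d, x = y + d by exists (x - y); lia.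
nia.
Qed.

Lemma ar_quarter x y r : x + y = r -> x * y <= r * r %/ 4.
Proof. move=> <-; rewrite leq_divRL //; exact: sq. Qed.

Lemma count_SS r m : #|[set <<W>>%MS | W : 'M['F_2]_(m, r)]| <= 2 ^ r * 2 ^ (r * r %/ 4).
Proof.
pose PG := [set pg : {set 'I_r} * {ffun 'I_r * 'I_r -> bool} |
   pg.2 \in pffun_on false (setX pg.1 (~: pg.1)) predT].
have sub : [set <<W>>%MS | W : 'M['F_2]_(m, r)] \subset
           [set <<Zfull pg.1 pg.2>>%MS | pg in PG].
  apply/subsetP => X /imsetP[W _ ->].
  have [P [G [hG hW]]] := encode W.
  apply/imsetP; exists (P, G); first by rewrite inE.
  by apply/esym/genmxP.
apply: leq_trans (subset_leq_card sub) _.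
apply: leq_trans (leq_imset_card _ _) _.
have E : #|PG| = \sum_(P : {set 'I_r}) #|pffun_on false (setX P (~: P)) predT|.
  rewrite -sum1_card (eq_bigl (fun pg => true && (pg.2 \in pffun_on false (setX pg.1 (~: pg.1)) predT))); last first.
    by move=> pg; rewrite inE.
  rewrite -(pair_big_dep xpredT (fun P G => G \in pffun_on false (setX P (~: P)) predT) (fun _ _ => 1)) /=.
  by apply: eq_bigr => P _; rewrite sum1_card.
rewrite E.
apply: (@leq_trans (\sum_(P : {set 'I_r}) 2 ^ (r * r %/ 4))).
  apply: leq_sum => P _; rewrite card_pffun_on.
  have -> : #|(predT : {pred bool})| = 2 by rewrite card_bool.
  rewrite leq_exp2l // cardsX; apply: ar_quarter.
  by rewrite cardsC card_ord.
rewrite sum_nat_const -cardsT -powersetT card_powerset cardsT card_ord.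
by [].
Qed.

End LinAlg12.

Section LinAlg13.
Import GRing.Theory.

Section Range.
Variables (n : nat) (T : 'M[bool]_n).
Local Open Scope ring_scope.

Let Mx := map_mx (fun b : bool => ((nat_of_bool b)%:R)%R : 'F_2) T.
Let Cb := col_base Mx.
Let Rb := row_base Mx.

Definition Phi (W : 'M['F_2]_(\rank Mx)) : 'cV[bool]_n :=
  \col_i (W *m (row i Cb)^T != 0).

Definition Xv (v : 'cV[bool]_n) : 'M['F_2]_(n, \rank Mx) :=
  \matrix_(j, l) (if v j 0 then Rb l j else 0).

Lemma entryE v i j : (Xv v *m (row i Cb)^T) j 0 = if v j 0 then Mx i j else 0.
Proof.
rewrite mxE; case: ifP => vj.
  rewrite -[in RHS](mulmx_base Mx) mxE; apply: eq_bigr => l _.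
  by rewrite !mxE vj mulrC.
by rewrite big1 // => l _; rewrite !mxE vj mul0r.
Qed.

Lemma bmulv_Phi v : bmulv T v = Phi (<<Xv v>>%MS).
Proof.
apply/matrixP => i z; rewrite (ord1 z) !mxE genmx_mul0 cV_neq0.
apply/existsP/existsP => [[k /andP[Tik vk]]|[j]].
  by exists k; rewrite entryE vk /Mx mxE Tik.
rewrite entryE; case: ifP => vj; last by rewrite eqxx.
by rewrite /Mx mxE F2_nat_neq0 => Tij; exists j; rewrite Tij vj.
Qed.

Lemma range_bound : (#|brange T| <= 2 ^ rank2 T * 2 ^ (rank2 T * rank2 T %/ 4))%N.
Proof.
rewrite /rank2 -/Mx.
apply: leq_trans (count_SS (\rank Mx) n).
have sub : brange T \subset [set Phi W | W in [set <<W>>%MS | W : 'M['F_2]_(n, \rank Mx)]].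
  apply/subsetP => u /imsetP[v _ ->]; rewrite bmulv_Phi.
  by apply/imsetP; exists (<<Xv v>>%MS) => //; apply/imsetP; exists (Xv v).
apply: leq_trans (subset_leq_card sub) _.
exact: leq_imset_card.
Qed.

End Range.

End LinAlg13.

Lemma bigmin_le_seq (I : eqType) (r : seq I) (x0 : nat) (F : I -> nat) j :
  j \in r -> \big[minn/x0]_(i <- r) F i <= F j.
Proof.
elim: r => [//|x r IH]; rewrite inE big_cons => /orP[/eqP->|jr].
  exact: geq_minl.
exact: leq_trans (geq_minr _ _) (IH jr).
Qed.

Lemma bigmin_le (I : finType) (x0 : nat) (F : I -> nat) j :
  \big[minn/x0]_(i : I) F i <= F j.
Proof. exact: bigmin_le_seq (mem_index_enum j). Qed.

Section RealStuff.
Local Open Scope R_scope.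
Lemma INR_muln a b : INR (a * b)%N = (INR a * INR b).
Proof. exact: mult_INR. Qed.
Lemma INR_addn a b : INR (a + b)%N = (INR a + INR b).
Proof. exact: plus_INR. Qed.

Lemma INR_exp2 k : INR (2 ^ k)%N = Rpower 2 (INR k).
Proof.
rewrite Rpower_pow; last lra.
elim: k => [|k IH] /=; first by [].
by rewrite expnS INR_muln IH.
Qed.

Lemma Rpower_pos x : (0 < Rpower 2 x).
Proof. rewrite /Rpower; exact: exp_pos. Qed.

Lemma bigRmax_ge1 (I : eqType) (r : seq I) (P : pred I) (F : I -> R) :
  (1 <= \big[Rmax/1]_(i <- r | P i) F i).
Proof.
elim: r => [|x r IH]; rewrite ?big_nil ?big_cons; first by apply: Rle_refl.
by case: (P x) => //; apply: Rle_trans IH (Rmax_r _ _).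
Qed.

Lemma bigRmax_ge (I : eqType) (r : seq I) (P : pred I) (F : I -> R) j :
  j \in r -> P j -> (F j <= \big[Rmax/1]_(i <- r | P i) F i).
Proof.
elim: r => [//|x r IH]; rewrite inE big_cons => /orP[/eqP->|jr] Pj.
  by rewrite Pj; apply: Rmax_l.
case: (P x); last exact: IH.
by apply: Rle_trans (IH jr Pj) (Rmax_r _ _).
Qed.

Section Final.
Variable eps : R.
Hypotheses (e0 : (0 < eps)) (e4 : (eps < 4)).
Let dl := (/ (4 - eps) - / 4).
Let C0 := Rpower 2 (/ (4 * dl)).

Lemma dl_pos : (0 < dl).
Proof.
rewrite /dl; apply: Rlt_Rminus; apply: Rinv_lt_contravar; lra.
Qed.

Definition fb r := (2 ^ r * 2 ^ (r * r %/ 4))%N.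

Lemma fb_bound r : (INR (fb r) <= C0 * Rpower 2 (INR r ^ 2 / (4 - eps))).
Proof.
rewrite /fb INR_muln !INR_exp2 /C0 -!Rpower_plus.
apply: Rle_Rpower; first lra.
have d0 := dl_pos.
have hk : (INR (r * r %/ 4) <= INR r ^ 2 / 4).
  have : (r * r %/ 4 * 4 <= r * r)%N by rewrite leq_trunc_div.
  move/leP/le_INR; rewrite INR_muln INR_muln /=.
  move=> h; lra.
have e1 : (INR r ^ 2 / (4 - eps) = INR r ^ 2 / 4 + dl * INR r ^ 2).
  rewrite /dl; field; lra.
rewrite e1.
suff : (INR r <= / (4 * dl) + dl * INR r ^ 2) by lra.
have hx : (0 <= (2 * dl * INR r - 1) ^ 2) by apply: pow2_ge_0.
have hinv : (/ (4 * dl) * (4 * dl) = 1) by field; lra.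
nra.
Qed.

End Final.
End RealStuff.

Lemma sc_nat (Sigma : finType) n (T : Sigma -> 'M[bool]_n) a :
  (subset_complexity T <= (1 + #|Sigma| * \max_(w | w != a) fb (rank2 (T w))) *
     (11 * n * n + 2 * n + cyclicity (T a)))%N.
Proof.
apply: leq_trans (bigmin_le _ _ [set a]) _; rewrite /sc_term.
apply: leq_mul; last exact: monoid_bound.
rewrite leq_add2l.
apply: (@leq_trans (\sum_(w in ~: [set a]) \max_(w | w != a) fb (rank2 (T w)))).
  apply: leq_sum => w; rewrite in_setC in_set1 => wa.
  apply: leq_trans (range_bound _) _.
  exact: (leq_bigmax_cond (F := fun w => fb (rank2 (T w)))).
rewrite sum_nat_const leq_mul2r; apply/orP; right.
exact: max_card.
Qed.

Lemma nc_bound n c : (0 < c)%N -> (11 * n * n + 2 * n + c <= 15 * (c + n * n))%N.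
Proof. move=> c0; have : (n <= n * n)%N by case: n => // k; rewrite leq_pmulr. nia. Qed.

Local Open Scope R_scope.

Theorem proposition3 :
  forall eps : R, 0 < eps -> eps < 4 ->
  exists C : R,
  forall (Sigma : finType) (n : nat) (I F : {set 'I_n})
         (delta : {set 'I_n * Sigma * 'I_n}) (a : Sigma),
    INR (subset_complexity (trans_mx delta)) <=
    C * INR #|Sigma| * (INR (cyclicity (trans_mx delta a)) + INR n ^ 2) *
    \big[Rmax/1]_(b : Sigma | b != a)
       Rpower 2 (INR (rank2 (trans_mx delta b)) ^ 2 / (4 - eps)).
Proof.
move=> eps e0 e4.
set C0 := Rpower 2 (/ (4 * (/ (4 - eps) - / 4))).
have C00 : 0 <= C0 by apply: Rlt_le; apply: Rpower_pos.
exists (15 * (C0 + 1)) => Sigma n I F delta a.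
set T := trans_mx delta.
set Mx := \big[Rmax/1]_(b : Sigma | b != a) Rpower 2 (INR (rank2 (T b)) ^ 2 / (4 - eps)).
have hM1 : 1 <= Mx by apply: bigRmax_ge1.
have hMb : forall b, b != a -> Rpower 2 (INR (rank2 (T b)) ^ 2 / (4 - eps)) <= Mx.
  by move=> b ba; apply: (@bigRmax_ge _ _ _ (fun b => Rpower 2 (INR (rank2 (T b)) ^ 2 / (4 - eps))) b (mem_index_enum b)).
have hmx : INR (\max_(w | w != a) fb (rank2 (T w))) <= C0 * Mx.
  apply: (big_ind (fun m => INR m <= C0 * Mx)).
  - by rewrite /=; apply: Rmult_le_pos => //; lra.
  - move=> x y hx hy; case: (leqP x y) => h.
      by [].
    by [].
  - move=> w wa; apply: Rle_trans (fb_bound e0 e4 _) _.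
    apply: Rmult_le_compat_l => //; exact: hMb.
have hsc := sc_nat T a.
have hNc := nc_bound n (cyc_pos (T a)).
have hS : 1 <= INR #|Sigma|.
  have : (1 <= #|Sigma|)%N by apply/card_gt0P; exists a.
  by move/leP/le_INR.
move: hmx hsc hNc; set m := \max_(w | w != a) fb (rank2 (T w)).
set c := cyclicity (T a).
move=> hmx /leP/le_INR hsc /leP/le_INR hNc.
rewrite INR_muln INR_addn INR_muln /= in hsc.
have h1 : 1 + INR #|Sigma| * INR m <= INR #|Sigma| * (C0 + 1) * Mx.
  have a1 : 1 * 1 <= INR #|Sigma| * Mx by apply: Rmult_le_compat; lra.
  rewrite Rmult_1_r in a1.
  have a2 : INR #|Sigma| * INR m <= INR #|Sigma| * (C0 * Mx).
    apply: Rmult_le_compat_l => //; lra.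
  have -> : INR #|Sigma| * (C0 + 1) * Mx = INR #|Sigma| * Mx + INR #|Sigma| * (C0 * Mx) by ring.
  lra.
have h15 : 0 <= INR c + INR n * INR n.
  apply: Rplus_le_le_0_compat; [apply: pos_INR | apply: Rmult_le_pos; apply: pos_INR].
apply: Rle_trans hsc _.
apply: Rle_trans (Rmult_le_compat_l _ _ _ _ hNc) _.
  apply: Rplus_le_le_0_compat; first lra.
  apply: Rmult_le_pos; apply: pos_INR.
rewrite INR_muln INR_addn INR_muln.
have -> : INR 15 = 15 by simpl; lra.
have : (1 + INR #|Sigma| * INR m) * (15 * (INR c + INR n * INR n)) <=
       (INR #|Sigma| * (C0 + 1) * Mx) * (15 * (INR c + INR n * INR n)).
  by apply: Rmult_le_compat_r => //; lra.
have -> : INR n ^ 2 = INR n * INR n by ring.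
move=> h; apply: Rle_trans h _; right; ring.
Qed.
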